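(* Let $\mathbb{E},\mathbb{F}$ be finite-dimensional real inner-product spaces, $K\subseteq\mathbb{E}$ a pointed closed convex cone with nonempty interior, $\mathcal{A}\colon\mathbb{E}\to\mathbb{F}^*$ linear, $c\in\mathbb{E}^*$, $b\in\mathbb{F}^*$. Set $\mathcal{C}_P:=\{x\in K : \mathcal{A}(x)=b\}$ and $\mathcal{C}_D:=\{s\in K^* : s\in\operatorname{Im}(\mathcal{A}^* )-c\}$. Suppose $\mathcal{C}_P\cap\operatorname{int}(K)\neq\emptyset$ and let $\bar x\in\mathcal{C}_P$. Then there exists $\bar s\in\mathcal{C}_D$ such that $(\bar x,\bar s)$ is strictly complementary if and only if $c\in\operatorname{relint}(N_{\mathcal{C}_P}(\bar x))$.
   Context: $K^*:=\{s\in\mathbb{E}^*:\langle s,x\rangle\ge0\ \forall x\in K\}$. A pair $(\bar x,\bar s)\in\mathcal{C}_P\times\mathcal{C}_D$ is strictly complementary if there is a face $F$ of $K$ with $\bar x\in\operatorname{relint}(F)$ and $\bar s\in\operatorname{relint}(F^{\triangle})$, where $F^{\triangle}:=K^*\cap F^\perp$ is the conjugate face. The normal cone of a convex set $\mathcal{C}$ at $\bar x\in\mathcal{C}$ is $N_{\mathcal{C}}(\bar x):=\{c\in\mathbb{E}^* : \langle c,x\rangle\le\langle c,\bar x\rangle\ \forall x\in\mathcal{C}\}$; $\operatorname{relint}$ is the relative interior. *)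

(* Defs.v *)
From HB Require Import structures.
From mathcomp Require Import all_boot all_order all_algebra.
From mathcomp Require Import reals.
Set Implicit Arguments. Unset Strict Implicit. Unset Printing Implicit Defensive.
Import Order.TTheory GRing.Theory Num.Theory.
Local Open Scope ring_scope.

(* E = 'rV[R]_n and F = 'rV[R]_m with the standard inner product; the dual
   spaces E^*, F^* are again row vectors, paired by [pair]. *)

Section Defs.
Variable R : realType.

Definition pair (n : nat) (s x : 'rV[R]_n) : R := (s *m x^T) 0 0.

Definition in_ball (n : nat) (x : 'rV[R]_n) (e : R) (y : 'rV[R]_n) : Prop :=
  pair (y - x) (y - x) < e ^+ 2.

Definition interior (n : nat) (C : 'rV[R]_n -> Prop) (x : 'rV[R]_n) : Prop :=
  exists2 e : R, 0 < e & forall y, in_ball x e y -> C y.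

Definition closed_set (n : nat) (C : 'rV[R]_n -> Prop) : Prop :=
  forall x, ~ C x -> exists2 e : R, 0 < e & forall y, in_ball x e y -> ~ C y.

Definition convex_set (n : nat) (C : 'rV[R]_n -> Prop) : Prop :=
  forall x y (t : R), C x -> C y -> 0 <= t -> t <= 1 -> C (t *: x + (1 - t) *: y).

Definition is_cone (n : nat) (C : 'rV[R]_n -> Prop) : Prop :=
  C 0 /\ forall x (t : R), C x -> 0 <= t -> C (t *: x).

Definition pointed (n : nat) (C : 'rV[R]_n -> Prop) : Prop :=
  forall x, C x -> C (- x) -> x = 0.

Definition aff_hull (n : nat) (C : 'rV[R]_n -> Prop) (y : 'rV[R]_n) : Prop :=
  exists (k : nat) (l : 'I_k -> R) (p : 'I_k -> 'rV[R]_n),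
    [/\ forall i, C (p i), \sum_(i < k) l i = 1 & y = \sum_(i < k) l i *: p i].

Definition relint (n : nat) (C : 'rV[R]_n -> Prop) (x : 'rV[R]_n) : Prop :=
  C x /\ exists2 e : R, 0 < e &
    forall y, aff_hull C y -> in_ball x e y -> C y.

Definition dual_cone (n : nat) (K : 'rV[R]_n -> Prop) (s : 'rV[R]_n) : Prop :=
  forall x, K x -> 0 <= pair s x.

Definition face (n : nat) (K F : 'rV[R]_n -> Prop) : Prop :=
  [/\ forall x, F x -> K x, convex_set F &
      forall x y (t : R), K x -> K y -> 0 < t -> t < 1 ->
        F (t *: x + (1 - t) *: y) -> F x /\ F y].

Definition conj_face (n : nat) (K F : 'rV[R]_n -> Prop) (s : 'rV[R]_n) : Prop :=
  dual_cone K s /\ forall x, F x -> pair s x = 0.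

Definition strictly_complementary (n : nat) (K : 'rV[R]_n -> Prop)
    (x s : 'rV[R]_n) : Prop :=
  exists F : 'rV[R]_n -> Prop, [/\ face K F, relint F x & relint (conj_face K F) s].

Definition normal_cone (n : nat) (C : 'rV[R]_n -> Prop) (xb c : 'rV[R]_n) : Prop :=
  forall x, C x -> pair c x <= pair c xb.

(* A : E -> F^* is x |-> x *m A; its adjoint A^* : F -> E^* is y |-> y *m A^T. *)
Definition primal_feas (n m : nat) (K : 'rV[R]_n -> Prop) (A : 'M[R]_(n, m))
    (b : 'rV[R]_m) (x : 'rV[R]_n) : Prop :=
  K x /\ x *m A = b.

Definition dual_feas (n m : nat) (K : 'rV[R]_n -> Prop) (A : 'M[R]_(n, m))
    (c : 'rV[R]_n) (s : 'rV[R]_n) : Prop :=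
  dual_cone K s /\ exists y : 'rV[R]_m, s = y *m A^T - c.

End Defs.

(* Main.v *)
Require Import Defs.
From HB Require Import structures.
From mathcomp Require Import all_boot all_order all_algebra.
From mathcomp Require Import reals.
From mathcomp Require Import classical_sets.
From mathcomp Require Import ring lra.
From Stdlib Require Import Classical.
From mathcomp Require Import zify.
Import Order.TTheory GRing.Theory Num.Theory.
Local Open Scope ring_scope.

Set Implicit Arguments. Unset Strict Implicit. Unset Printing Implicit Defensive.



Section Pair.
Variable R : realType.
Variable n : nat.
Implicit Types (s x y : 'rV[R]_n).

Lemma pairE s x : pair s x = \sum_i s 0 i * x 0 i.
Proof. by rewrite /pair !mxE; apply: eq_bigr => i _; rewrite mxE. Qed.

Lemma pairDl s1 s2 x : pair (s1 + s2) x = pair s1 x + pair s2 x.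
Proof. by rewrite !pairE -big_split; apply: eq_bigr => i _; rewrite mxE mulrDl. Qed.
Lemma pairDr s x1 x2 : pair s (x1 + x2) = pair s x1 + pair s x2.
Proof. by rewrite !pairE -big_split; apply: eq_bigr => i _; rewrite mxE mulrDr. Qed.
Lemma pairZl a s x : pair (a *: s) x = a * pair s x.
Proof. by rewrite !pairE mulr_sumr; apply: eq_bigr => i _; rewrite mxE mulrA. Qed.
Lemma pairZr a s x : pair s (a *: x) = a * pair s x.
Proof. by rewrite !pairE mulr_sumr; apply: eq_bigr => i _; rewrite mxE mulrCA. Qed.
Lemma pairNl s x : pair (- s) x = - pair s x.
Proof. by rewrite -scaleN1r pairZl mulN1r. Qed.
Lemma pairNr s x : pair s (- x) = - pair s x.
Proof. by rewrite -scaleN1r pairZr mulN1r. Qed.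
Lemma pairBl s1 s2 x : pair (s1 - s2) x = pair s1 x - pair s2 x.
Proof. by rewrite pairDl pairNl. Qed.
Lemma pairBr s x1 x2 : pair s (x1 - x2) = pair s x1 - pair s x2.
Proof. by rewrite pairDr pairNr. Qed.
Lemma pair0l x : pair 0 x = 0.
Proof. by rewrite pairE big1 // => i _; rewrite mxE mul0r. Qed.
Lemma pair0r x : pair x 0 = 0.
Proof. by rewrite pairE big1 // => i _; rewrite mxE mulr0. Qed.
Lemma pairC s x : pair s x = pair x s.
Proof. by rewrite !pairE; apply: eq_bigr => i _; rewrite mulrC. Qed.
Lemma pair_ge0 x : 0 <= pair x x.
Proof. by rewrite pairE sumr_ge0 // => i _; rewrite -expr2 sqr_ge0. Qed.
Lemma pair_eq0 x : pair x x = 0 -> x = 0.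
Proof.
rewrite pairE => /eqP; rewrite psumr_eq0 => [/allP H|i _]; last by rewrite -expr2 sqr_ge0.
apply/rowP => i; rewrite mxE; have := H i (mem_index_enum _).
by rewrite -expr2 sqrf_eq0 => /eqP.
Qed.
Lemma pair_coord x i : x 0 i ^+ 2 <= pair x x.
Proof.
rewrite pairE (bigD1 i) //= -expr2 lerDl; apply: sumr_ge0 => j _; by rewrite -expr2 sqr_ge0.
Qed.

Lemma pair_mulT (m : nat) (y : 'rV[R]_m) (A : 'M[R]_(n, m)) x :
  pair (y *m A^T) x = pair y (x *m A).
Proof. by rewrite /pair trmx_mul mulmxA. Qed.

End Pair.



Lemma split_lshift m k (i : 'I_m) : split (lshift k i) = inl i.
Proof. exact: (unsplitK (inl _ i)). Qed.
Lemma split_rshift m k (i : 'I_k) : split (rshift m i) = inr i.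
Proof. exact: (unsplitK (inr _ i)). Qed.

Section Convex.
Variable R : realType.
Variable n : nat.
Implicit Types (C : 'rV[R]_n -> Prop) (x y a b : 'rV[R]_n).

Lemma aff_self C x : C x -> aff_hull C x.
Proof.
move=> Cx; exists 1%N, (fun _ => 1), (fun _ => x); split => //.
  by rewrite big_ord1.
by rewrite big_ord1 scale1r.
Qed.

Lemma aff_affine C y a (t : R) : aff_hull C y -> C a ->
  aff_hull C (t *: y + (1 - t) *: a).
Proof.
move=> [k [l [p [Cp sl ->]]]] Ca.
exists (k + 1)%N, (fun i => match split i with inl j => t * l j | inr _ => 1 - t end),
  (fun i => match split i with inl j => p j | inr _ => a end); split.
- by move=> i; case: (split i).
- rewrite big_split_ord /= big_ord1 split_rshift.
  under eq_bigr do rewrite split_lshift.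
  by rewrite -mulr_sumr sl mulr1 addrC subrK.
- rewrite big_split_ord /= big_ord1 split_rshift.
  under [X in _ = X + _]eq_bigr do rewrite split_lshift.
  by rewrite scaler_sumr; congr (_ + _); apply: eq_bigr => i _; rewrite scalerA.
Qed.

Lemma aff2 C a b (t : R) : C a -> C b -> aff_hull C (t *: a + (1 - t) *: b).
Proof. by move=> Ca Cb; apply: aff_affine => //; apply: aff_self. Qed.

Lemma small_scale (v : 'rV[R]_n) (e : R) : 0 < e ->
  exists2 eps : R, 0 < eps /\ eps <= 1 & pair (eps *: v) (eps *: v) < e ^+ 2.
Proof.
move=> e0; set q := pair v v; have q0 : 0 <= q := pair_ge0 v.
have d0 : 0 < q + e + 1 by lra.
exists (e / (q + e + 1)); first split.
- by apply: divr_gt0.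
- by rewrite ler_pdivrMr // mul1r; lra.
rewrite pairZl pairZr -/q mulrA -expr2 expr_div_n.
rewrite mulrAC ltr_pdivrMr ?exprn_gt0 // ltr_pM2l ?exprn_gt0 //.
rewrite expr2; nra.
Qed.

Lemma conv_mid C a b : convex_set C -> C a -> C b ->
  C (2^-1 *: a + 2^-1 *: b).
Proof.
move=> cC Ca Cb; have := cC _ _ (2^-1) Ca Cb.
have -> : (1 - 2^-1 : R) = 2^-1 by field.
by apply; rewrite ?invr_ge0 ?invf_le1 ?ler0n ?ler1n.
Qed.

Lemma seg_in C x v (t : R) : convex_set C -> C (x + v) -> C (x - v) ->
  `|t| <= 1 -> C (x + t *: v).
Proof.
move=> cC Cp Cm ht.
have Cx : C x.
  have := conv_mid cC Cp Cm.
  have -> // : 2^-1 *: (x + v) + 2^-1 *: (x - v) = x.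
  by apply/rowP => i; rewrite !mxE; field.
case: (lerP 0 t) => t0.
- have := cC _ _ t Cp Cx t0; rewrite ger0_norm // in ht.
  have -> : t *: (x + v) + (1 - t) *: x = x + t *: v.
    by apply/rowP => i; rewrite !mxE; ring.
  by apply.
- have := cC _ _ (- t) Cm Cx; rewrite ltr0_norm // in ht.
  have -> : - t *: (x - v) + (1 - - t) *: x = x + t *: v.
    by apply/rowP => i; rewrite !mxE; ring.
  by apply; lra.
Qed.

End Convex.



Section RI.
Variable R : realType.
Variable n : nat.
Implicit Types (C : 'rV[R]_n -> Prop) (x y a b : 'rV[R]_n).

Lemma coord_lt (w : 'rV[R]_n) (e : R) i : 0 < e -> pair w w < e ^+ 2 -> `|w 0 i| < e.
Proof.
move=> e0 hw; rewrite -(@ltr_pXn2r _ 2) // ?inE ?normr_ge0 ?ltW //.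
rewrite real_normK ?num_real //; apply: le_lt_trans (pair_coord w i) hw.
by rewrite nnegrE normr_ge0.
by rewrite nnegrE ltW.
Qed.

Lemma conv_avg C k (p : 'I_k -> 'rV[R]_n) : convex_set C -> (0 < k)%N ->
  (forall j, C (p j)) -> C (k%:R^-1 *: \sum_(j < k) p j).
Proof.
move=> cC; elim: k p => // k IH p _ Cp.
case: k IH p Cp => [|k] IH p Cp.
  by rewrite big_ord1 invr1 scale1r.
rewrite big_ord_recr /=.
set S := \sum_(i < k.+1) _.
have CS : C (k.+1%:R^-1 *: S) by apply: IH.
have := cC _ _ (k.+1%:R / k.+2%:R) CS (Cp ord_max).
have -> : k.+1%:R / k.+2%:R *: (k.+1%:R^-1 *: S) + (1 - k.+1%:R / k.+2%:R) *: p ord_max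
   = k.+2%:R^-1 *: (S + p ord_max).
  apply/rowP => i; rewrite !mxE; field.
  by have k0 := ler0n R k; apply/andP; split; rewrite gt_eqF //; lra.
apply; first by rewrite divr_ge0 ?ler0n.
by rewrite ler_pdivrMr ?ltr0n // mul1r ler_nat.
Qed.

Lemma aff_sub C x y k (G : 'M[R]_(k, n)) : (forall c, C c -> (c - x <= G)%MS) ->
  aff_hull C y -> (y - x <= G)%MS.
Proof.
move=> H [m [l [p [Cp sl ->]]]].
have -> : \sum_(i < m) l i *: p i - x = \sum_(i < m) l i *: (p i - x).
  rewrite -[X in _ - X = _]scale1r -sl scaler_suml -sumrB.
  by apply: eq_bigr => i _; rewrite scalerBr.
by apply: summx_sub => i _; apply: scalemx_sub; apply: H.
Qed.

Lemma relint_gen C x k (G : 'M[R]_(k, n)) : convex_set C -> C x ->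
  (forall j, C (x + row j G) /\ C (x - row j G)) ->
  (forall c, C c -> (c - x <= G)%MS) -> relint C x.
Proof.
move=> cC Cx HG Hsp; split => //.
case: k G HG Hsp => [|k] G HG Hsp.
  exists 1 => // y ay _; have := aff_sub Hsp ay.
  by rewrite (flatmx0 G) => /submx0null /eqP; rewrite subr_eq0 => /eqP ->.
set P := pinvmx G.
set beta := \sum_(j < k.+1) \sum_(i < n) `|P i j|.
have b0 : 0 <= beta by apply: sumr_ge0 => j _; apply: sumr_ge0 => i _.
have d0 : 0 < k.+1%:R * beta + 1 by have := mulr_ge0 (ler0n R k.+1) b0; lra.
exists (k.+1%:R * beta + 1)^-1; first by rewrite invr_gt0.
move=> y ay hy.
have e0 : 0 < (k.+1%:R * beta + 1)^-1 by rewrite invr_gt0.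
set w := y - x in hy.
have sw : (w <= G)%MS by apply: aff_sub ay.
set al := w *m P.
have wG : w = al *m G by rewrite /al mulmxKpV.
have hal : forall j, `|al 0 j| <= (k.+1%:R * beta + 1)^-1 * beta.
  move=> j; rewrite /al mxE.
  apply: le_trans (ler_norm_sum _ _ _) _.
  apply: (@le_trans _ _ ((k.+1%:R * beta + 1)^-1 * \sum_(i < n) `|P i j|)).
    rewrite mulr_sumr; apply: ler_sum => i _; rewrite normrM.
    by apply: ler_wpM2r => //; apply: ltW; apply: coord_lt.
  apply: ler_wpM2l; first exact: ltW.
  by rewrite /beta (bigD1 j) //= lerDl; apply: sumr_ge0 => j' _; apply: sumr_ge0.
have yE : y = x + w by rewrite /w addrC subrK.
rewrite yE wG mulmx_sum_row.
set S := \sum_i _.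
have -> : x + S = k.+1%:R^-1 *: \sum_(j < k.+1) (x + (k.+1%:R * al 0 j) *: row j G).
  rewrite big_split /= sumr_const card_ord scalerDr -scaler_nat scalerA mulVf ?pnatr_eq0 //.
  rewrite scale1r; congr (_ + _); rewrite scaler_sumr /S; apply: eq_bigr => j _.
  by rewrite scalerA mulrA mulVf ?pnatr_eq0 // mul1r.
apply: conv_avg => // j; have [Hp Hm] := HG j.
apply: seg_in => //; rewrite normrM ger0_norm ?ler0n //.
apply: (@le_trans _ _ (k.+1%:R * ((k.+1%:R * beta + 1)^-1 * beta))).
  by apply: ler_wpM2l => //; rewrite ler0n.
rewrite mulrCA mulrC ler_pdivrMr // mul1r; lra.
Qed.

Lemma relint_seg C s0 s1 (l : R) : convex_set C -> relint C s0 -> C s1 ->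
  0 < l -> l <= 1 -> relint C (l *: s0 + (1 - l) *: s1).
Proof.
move=> cC [Cs0 [r r0 Hr]] Cs1 l0 l1; split; first by apply: cC => //; apply: ltW.
exists (l * r); first by apply: mulr_gt0.
move=> y ay hy.
set y' := l^-1 *: y + (1 - l^-1) *: s1.
have ay' : aff_hull C y' by apply: aff_affine.
have Cy' : C y'.
  apply: Hr => //; rewrite /in_ball.
  have -> : y' - s0 = l^-1 *: (y - (l *: s0 + (1 - l) *: s1)).
    apply/rowP => i; rewrite !mxE; field; lra.
  rewrite pairZl pairZr mulrA -expr2.
  move: hy; rewrite /in_ball exprMn => hy.
  rewrite -(ltr_pM2l (exprn_gt0 2 l0)) mulrA -exprMn mulfV ?gt_eqF // expr1n mul1r //.
have -> : y = l *: y' + (1 - l) *: s1.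
  apply/rowP => i; rewrite /y' !mxE; field; lra.
by apply: cC => //; apply: ltW.
Qed.

Lemma span_exists (D : 'rV[R]_n -> Prop) :
  exists k (G : 'M[R]_(k, n)), (forall j, D (row j G)) /\ forall x, D x -> (x <= G)%MS.
Proof.
suff H : forall d k (G : 'M[R]_(k, n)), (n - \rank G <= d)%N -> (forall j, D (row j G)) ->
  exists k (G : 'M[R]_(k, n)), (forall j, D (row j G)) /\ forall x, D x -> (x <= G)%MS.
  by apply: (H n 0%N 0) => [|[]//]; rewrite leq_subr.
elim=> [|d IH] k G hd HG.
  exists k, G; split => // x _; apply: submx_full.
  by rewrite /row_full eqn_leq rank_leq_col /= -subn_eq0 -leqn0.
case: (classic (forall x, D x -> (x <= G)%MS)) => [H|]; first by exists k, G.
move=> /not_all_ex_not [x Hx].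
have Dx : D x := @not_imply_elim _ _ Hx.
have nx : ~ (x <= G)%MS := @not_imply_elim2 _ _ Hx.
have lt : (G < col_mx G x)%MS.
  rewrite ltmxE -addsmxE addsmxSl /=; apply/negP => H; apply: nx.
  by apply: submx_trans H; rewrite -addsmxE addsmxSr.
apply: (IH _ (col_mx G x)).
  have := rank_ltmx lt; have := rank_leq_col (col_mx G x).
  move: hd; set r := \rank G; set r' := \rank _; lia.
move=> j; rewrite -(splitK j); case: (split j) => j' /=; first by rewrite rowKu.
by rewrite rowKd row_id.
Qed.

End RI.



Section Riesz.
Variable R : realType.
Variable n : nat.
Variable T : 'rV[R]_n -> Prop.
Hypothesis TD : forall a b, T a -> T b -> T (a + b).
Hypothesis TZ : forall a (t : R), T a -> 0 <= t -> T (t *: a).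

Lemma rV1_mul (u : 'rV[R]_1) (z : 'rV[R]_n) : u *m z = u 0 0 *: z.
Proof. by apply/rowP => i; rewrite !mxE big_ord1. Qed.

Lemma riesz_step (M : 'M[R]_n) g z :
  (forall x, T x -> (x <= M)%MS -> pair g x <= 0) ->
  (exists2 p, (p <= M)%MS & T (z + p)) -> (exists2 p, (p <= M)%MS & T (p - z)) ->
  exists g', (forall x, T x -> (x <= M + z)%MS -> pair g' x <= 0) /\
             (forall x, (x <= M)%MS -> pair g' x = pair g x).
Proof.
move=> Hg [p1 hp1 Tp1] [p2 hp2 Tp2].
case: (boolP (z <= M)%MS) => zM.
  by exists g; split => // x Tx; rewrite (addsmx_idPl zM); apply: Hg.
set Q := cokermx M.
set v := z *m Q.
have v0 : v != 0 by rewrite /v /Q -submxE.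
set w0 := v *m Q^T.
have w0M : forall x, (x <= M)%MS -> pair w0 x = 0.
  move=> x xM; rewrite /w0 pair_mulT.
  by move: xM; rewrite submxE => /eqP ->; rewrite pair0r.
have gam : 0 < pair w0 z.
  rewrite /w0 pair_mulT -/v lt_def pair_ge0 andbT; apply/negP => /eqP /pair_eq0.
  by move=> v0'; move: v0; rewrite v0' eqxx.
set w := (pair w0 z)^-1 *: w0.
have wM : forall x, (x <= M)%MS -> pair w x = 0.
  by move=> x xM; rewrite pairZl (w0M _ xM) mulr0.
have wz : pair w z = 1 by rewrite pairZl mulVf // gt_eqF.
pose U : set R := fun u => exists2 p, (p <= M)%MS & T (p - z) /\ u = pair g p.
have hU : has_sup U.
  split; first by exists (pair g p2), p2.
  exists (- pair g p1) => u [p hp [Tp ->]].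
  have : pair g (p + p1) <= 0.
    apply: Hg; last by rewrite addmx_sub.
    by have := TD Tp Tp1; rewrite addrA subrK.
  by rewrite pairDr; lra.
set a := sup U.
have ha1 : forall p, (p <= M)%MS -> T (p - z) -> pair g p <= a.
  by move=> p hp Tp; apply: sup_upper_bound => //; exists p.
have ha2 : forall p, (p <= M)%MS -> T (z + p) -> a <= - pair g p.
  move=> p hp Tp; apply: ge_sup; first by case: hU.
  move=> u [q hq [Tq ->]].
  have : pair g (q + p) <= 0.
    apply: Hg; last by rewrite addmx_sub.
    by have := TD Tq Tp; rewrite addrA subrK.
  by rewrite pairDr; lra.
exists (g + (a - pair g z) *: w); split; last first.
  by move=> x xM; rewrite pairDl pairZl wM // mulr0 addr0.
move=> x Tx /sub_addsmxP [u xE].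
set p := u.1 *m M in xE; set t := u.2 0 0.
have pM : (p <= M)%MS by apply: submxMl.
rewrite rV1_mul -/t in xE.
have -> : pair (g + (a - pair g z) *: w) x = pair g p + t * a.
  rewrite xE pairDl pairZl !pairDr !pairZr wM // wz; ring.
case: (ltgtP t 0) => t0.
- have : T ((- t)^-1 *: p - z).
    have -> : (- t)^-1 *: p - z = (- t)^-1 *: x.
      rewrite xE; apply/rowP => i; rewrite !mxE; field; lra.
    by apply: TZ => //; rewrite invr_ge0; lra.
  move/(ha1 _ (scalemx_sub _ pM)); rewrite pairZr => h.
  have tn : 0 < - t by lra.
  have : (- t) * ((- t)^-1 * pair g p) <= (- t) * a by rewrite ler_pM2l.
  by rewrite mulrA mulfV ?gt_eqF // mul1r; nra.
- have : T (z + t^-1 *: p).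
    have -> : z + t^-1 *: p = t^-1 *: x.
      rewrite xE; apply/rowP => i; rewrite !mxE; field; lra.
    by apply: TZ => //; rewrite invr_ge0; lra.
  move/(ha2 _ (scalemx_sub _ pM)); rewrite pairZr => h.
  have : t * a <= t * (- (t^-1 * pair g p)) by rewrite ler_pM2l.
  by rewrite mulrN mulrA mulfV ?gt_eqF // mul1r; nra.
- move: xE; rewrite t0 scale0r addr0 => xE.
  by rewrite mul0r addr0 -xE; apply: Hg => //; rewrite xE.
Qed.

Lemma riesz_full (M0 : 'M[R]_n)
  (H : forall z, exists2 p, (p <= M0)%MS & T (z + p)) :
  forall d (M : 'M[R]_n) g, (n - \rank M <= d)%N -> (M0 <= M)%MS ->
  (forall x, T x -> (x <= M)%MS -> pair g x <= 0) ->
  exists g', (forall x, T x -> pair g' x <= 0) /\ (forall x, (x <= M)%MS -> pair g' x = pair g x).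
Proof.
elim=> [|d IH] M g hd hM Hg.
  exists g; split => // x Tx; apply: Hg => //; apply: submx_full.
  by rewrite /row_full eqn_leq rank_leq_col /= -subn_eq0 -leqn0.
case: (boolP (row_full M)) => fM.
  by exists g; split => // x Tx; apply: Hg => //; apply: submx_full.
have [z nz] : exists z : 'rV[R]_n, ~~ (z <= M)%MS.
  apply: NNPP => Hn; move: fM; rewrite -sub1mx => /negP; apply.
  apply/row_subP => i; apply: contraT => hi; exfalso; apply: Hn; by exists (row i 1%:M).
have [g1 [Hg1 Eg1]] : exists g1, (forall x, T x -> (x <= M + z)%MS -> pair g1 x <= 0) /\
    (forall x, (x <= M)%MS -> pair g1 x = pair g x).
  apply: riesz_step => //.
    by have [p hp Tp] := H z; exists p => //; apply: submx_trans hM.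
  have [p hp Tp] := H (- z); exists p; last by rewrite addrC.
  exact: submx_trans hM.
have lt : (M < M + z)%MS.
  rewrite ltmxE addsmxSl /=; apply/negP => Hs; move/negP: nz; apply.
  exact: submx_trans (addsmxSr _ _) Hs.
have hr : (n - \rank (M + z)%MS <= d)%N.
  have := rank_ltmx lt; have := rank_leq_col (M + z)%MS.
  move: hd; set r := \rank M; set r' := \rank _; lia.
have hM' : (M0 <= M + z)%MS by exact: submx_trans hM (addsmxSl _ _).
have [g' [Hg' Eg']] := IH (M + z)%MS g1 hr hM' Hg1.
exists g'; split => // x xM; rewrite Eg' ?Eg1 //.
exact: submx_trans xM (addsmxSl _ _).
Qed.

End Riesz.



Section Main.
Variable R : realType.
Variables n m : nat.
Variable K : 'rV[R]_n -> Prop.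
Variable A : 'M[R]_(n, m).
Variable b : 'rV[R]_m.
Variable xb : 'rV[R]_n.
Hypothesis Kc : is_cone K.
Hypothesis Kv : convex_set K.
Hypothesis xbF : primal_feas K A b xb.

Definition Dset s := dual_cone K s /\ pair s xb = 0.

Lemma Kadd a c : K a -> K c -> K (a + c).
Proof.
move=> Ka Kc'; have := conv_mid Kv Ka Kc' => /(proj2 Kc _ 2) /(_ (ler0n _ 2)).
by rewrite scalerDr !scalerA mulfV ?pnatr_eq0 // !scale1r.
Qed.

Lemma dual_normal s y : Dset s -> normal_cone (primal_feas K A b) xb (y *m A^T - s).
Proof.
case: xbF => Kxb xbA [ds s0] x [Kx xA].
rewrite !pairBl !pair_mulT xA xbA s0 subr0 lerBlDr lerDl; exact: ds.
Qed.

Lemma normal_convex : convex_set (normal_cone (primal_feas K A b) xb).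
Proof.
move=> c1 c2 t h1 h2 t0 t1 x Cx.
rewrite !pairDl !pairZl.
have := h1 _ Cx; have := h2 _ Cx; nra.
Qed.

Definition Tcone d := exists2 x, K x & exists2 t : R, 0 <= t & d = t *: (x - xb).

Lemma TconeD a c : Tcone a -> Tcone c -> Tcone (a + c).
Proof.
case: xbF => Kxb _.
move=> [x1 K1 [t1 t10 ->]] [x2 K2 [t2 t20 ->]].
case: (eqVneq (t1 + t2) 0) => h.
  have e1 : t1 = 0 by lra.
  have e2 : t2 = 0 by lra.
  exists xb => //; exists 0 => //; rewrite e1 e2 !scale0r addr0 //.
have tp : 0 < t1 + t2 by rewrite lt_def h /=; lra.
exists ((t1 / (t1 + t2)) *: x1 + (1 - t1 / (t1 + t2)) *: x2).
  apply: Kv => //; first by rewrite divr_ge0 //; lra.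
  by rewrite ler_pdivrMr // mul1r; lra.
exists (t1 + t2); first lra.
apply/rowP => i; rewrite !mxE; field; lra.
Qed.

Lemma TconeZ a (t : R) : Tcone a -> 0 <= t -> Tcone (t *: a).
Proof.
move=> [x Kx [s s0 ->]] t0; exists x => //; exists (t * s); first exact: mulr_ge0.
by rewrite scalerA.
Qed.

Lemma normal_dual c :
  (exists x0, primal_feas K A b x0 /\ interior K x0) ->
  normal_cone (primal_feas K A b) xb c -> exists y, Dset (y *m A^T - c).
Proof.
case: xbF => Kxb xbA.
move=> [x0 [[Kx0 x0A] [e0 e00 Hball]]] Nc.
have H : forall z, exists2 p, (p <= kermx A)%MS & Tcone (z + p).
  move=> z; have [eps [ep0 ep1] hep] := small_scale z e00.
  have K1 : K (x0 + eps *: z).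
    by apply: Hball; rewrite /in_ball addrC addKr.
  exists (eps^-1 *: (x0 - xb)).
    by rewrite sub_kermx -scalemxAl mulmxBl x0A xbA subrr scaler0.
  exists (x0 + eps *: z) => //; exists eps^-1; first by rewrite invr_ge0 ltW.
  by apply/rowP => i; rewrite !mxE; field; rewrite gt_eqF.
have Hc : forall x, Tcone x -> (x <= kermx A)%MS -> pair c x <= 0.
  move=> x [x1 Kx1 [t t0 xE]]; rewrite sub_kermx xE -scalemxAl scaler_eq0 => /orP [/eqP t00|].
    by rewrite t00 scale0r pair0r.
  rewrite mulmxBl subr_eq0 xbA => /eqP x1A.
  rewrite pairZr pairBr; have := Nc x1 (conj Kx1 x1A); nra.
have [g [Hg Eg]] := riesz_full TconeD TconeZ H (leq_subr (\rank (kermx A)) n) (submx_refl _) Hc.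
set v := c - g.
have vA : (v <= A^T)%MS.
  rewrite submxE; apply/eqP/rowP => j; rewrite !mxE.
  have -> : \sum_i v 0 i * cokermx A^T i j = pair v (row j (cokermx A^T)^T).
    by rewrite pairE; apply: eq_bigr => i _; rewrite !mxE.
  have hk : (row j (cokermx A^T)^T <= kermx A)%MS.
    rewrite sub_kermx -row_mul.
    have -> : (cokermx A^T)^T *m A = 0.
      by rewrite -[A in _ *m A]trmxK -trmx_mul mulmx_coker trmx0.
    by rewrite row0.
  by rewrite /v pairBl Eg // subrr.
case/submxP: vA => y yE.
have gE : y *m A^T - c = - g by rewrite -yE /v addrAC subrr add0r.
have Kneg : K 0 by case: Kc.
have gxb : pair g xb = 0.
  have h1 : pair g xb <= 0.
    apply: Hg; exists (xb + xb); first exact: Kadd.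
    by exists 1 => //; rewrite scale1r addrK.
  have h2 : pair g (- xb) <= 0.
    by apply: Hg; exists 0 => //; exists 1 => //; rewrite scale1r sub0r.
  rewrite pairNr in h2; lra.
exists y; rewrite gE; split; last by rewrite pairNl gxb oppr0.
move=> x Kx; rewrite pairNl oppr_ge0.
have : pair g (x - xb) <= 0 by apply: Hg; exists x => //; exists 1 => //; rewrite scale1r.
by rewrite pairBr gxb subr0.
Qed.

End Main.



Section Faces.
Variable R : realType.
Variables n : nat.
Variable K : 'rV[R]_n -> Prop.
Variable xb : 'rV[R]_n.
Hypothesis Kc : is_cone K.
Hypothesis Kv : convex_set K.
Hypothesis Kxb : K xb.

Lemma conj_convex F : convex_set (conj_face K F).
Proof.
move=> s1 s2 t [d1 o1] [d2 o2] t0 t1; split.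
  move=> x Kx; rewrite pairDl !pairZl; have := d1 _ Kx; have := d2 _ Kx; nra.
by move=> x Fx; rewrite pairDl !pairZl o1 // o2 // !mulr0 addr0.
Qed.

Lemma conj0 F : conj_face K F 0.
Proof. by split => [x _|x _]; rewrite pair0l. Qed.

Lemma conjD F s1 s2 : conj_face K F s1 -> conj_face K F s2 -> conj_face K F (s1 + s2).
Proof.
move=> [d1 o1] [d2 o2]; split.
  by move=> x Kx; rewrite pairDl addr_ge0 //; [apply: d1 | apply: d2].
by move=> x Fx; rewrite pairDl o1 // o2 // addr0.
Qed.

Lemma conj_sum F k (G : 'M[R]_(k, n)) (P : pred 'I_k) :
  (forall j, conj_face K F (row j G)) -> conj_face K F (\sum_(j | P j) row j G).
Proof.
move=> H; elim/big_ind: _ => //; [exact: conj0 | exact: conjD].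
Qed.

Lemma face_conj F s : face K F -> relint F xb ->
  dual_cone K s -> pair s xb = 0 -> conj_face K F s.
Proof.
move=> [FK _ _] [Fxb [e e0 He]] ds s0; split => // z Fz.
have sz : 0 <= pair s z by apply: ds; apply: FK.
have [eps [ep0 ep1] hep] := small_scale (xb - z) e0.
have Fy : F ((1 + eps) *: xb + (1 - (1 + eps)) *: z).
  apply: He; first exact: aff2.
  rewrite /in_ball.
  have -> : (1 + eps) *: xb + (1 - (1 + eps)) *: z - xb = eps *: (xb - z).
    by apply/rowP => i; rewrite !mxE; ring.
  exact: hep.
have := ds _ (FK _ Fy); rewrite pairDr !pairZr s0; nra.
Qed.

Definition MF x := K x /\ exists2 e : R, 0 < e & K (xb + e *: (xb - x)).

Lemma MF_shrink x (e e' : R) : K (xb + e *: (xb - x)) -> 0 < e -> 0 <= e' -> e' <= e ->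
  K (xb + e' *: (xb - x)).
Proof.
move=> Ke e0 e'0 e'e.
have := Kv (t := e' / e) Ke Kxb.
have -> : e' / e *: (xb + e *: (xb - x)) + (1 - e' / e) *: xb = xb + e' *: (xb - x).
  by apply/rowP => i; rewrite !mxE; field; rewrite gt_eqF.
apply; first by rewrite divr_ge0 // ltW.
by rewrite ler_pdivrMr // mul1r.
Qed.

Lemma MF_xb : MF xb.
Proof. by split => //; exists 1 => //; rewrite subrr scaler0 addr0. Qed.

Lemma MF_convex : convex_set MF.
Proof.
move=> x y t [Kx [ex ex0 Hx]] [Ky [ey ey0 Hy]] t0 t1; split; first exact: Kv.
have es0 : 0 < ex + ey by lra.
exists (ex * ey / (ex + ey)); first by rewrite divr_gt0 // mulr_gt0.
have Hx' := MF_shrink Hx ex0 (ltW (divr_gt0 (mulr_gt0 ex0 ey0) es0)).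
have Hy' := MF_shrink Hy ey0 (ltW (divr_gt0 (mulr_gt0 ex0 ey0) es0)).
have := Kv (t := t) (Hx' _) (Hy' _) t0 t1.
have -> : t *: (xb + ex * ey / (ex + ey) *: (xb - x)) + (1 - t) *: (xb + ex * ey / (ex + ey) *: (xb - y))
   = xb + ex * ey / (ex + ey) *: (xb - (t *: x + (1 - t) *: y)).
  by apply/rowP => i; rewrite !mxE; field; rewrite gt_eqF.
apply.
- by rewrite ler_pdivrMr //; nra.
- by rewrite ler_pdivrMr //; nra.
Qed.

Lemma MF_face : face K MF.
Proof.
split; [by move=> x [] | exact: MF_convex |].
move=> x y t Kx Ky t0 t1 [Kz [e e0 Hz]].
set w := xb + e *: (xb - (t *: x + (1 - t) *: y)) in Hz.
split; split => //.
- have d0 : 0 < 1 + e - e * t by nra.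
  exists (e * t / (1 + e - e * t)); first by rewrite divr_gt0 // mulr_gt0.
  have := proj2 Kc _ ((1 + e - e * t)^-1) (Kadd Kc Kv Hz (proj2 Kc _ (e * (1 - t)) Ky _)).
  have -> : (1 + e - e * t)^-1 *: (w + e * (1 - t) *: y) = xb + e * t / (1 + e - e * t) *: (xb - x).
    by apply/rowP => i; rewrite /w !mxE; field; rewrite gt_eqF.
  apply; last by rewrite invr_ge0 ltW.
  by apply: mulr_ge0; lra.
- have d0 : 0 < 1 + e * t by nra.
  exists (e * (1 - t) / (1 + e * t)); first by rewrite divr_gt0 // mulr_gt0; lra.
  have := proj2 Kc _ ((1 + e * t)^-1) (Kadd Kc Kv Hz (proj2 Kc _ (e * t) Kx _)).
  have -> : (1 + e * t)^-1 *: (w + e * t *: x) = xb + e * (1 - t) / (1 + e * t) *: (xb - y).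
    by apply/rowP => i; rewrite /w !mxE; field; rewrite gt_eqF.
  apply; last by rewrite invr_ge0 ltW.
  by apply: mulr_ge0; lra.
Qed.

Lemma MF_relint : relint MF xb.
Proof.
have [k [G [HG Hsp]]] := span_exists (fun d => MF (xb + d) /\ MF (xb - d)).
apply: (relint_gen MF_convex MF_xb HG) => x [Kx [e e0 He]].
set l := e / (1 + e).
have l0 : 0 < l by rewrite divr_gt0 //; lra.
have l1 : l <= 1 by rewrite ler_pdivrMr; lra.
have MFe : MF (xb + e *: (xb - x)).
  split => //; exists e^-1; first by rewrite invr_gt0.
  have -> : xb + e^-1 *: (xb - (xb + e *: (xb - x))) = x.
    by apply/rowP => i; rewrite !mxE; field; rewrite gt_eqF.
  exact: Kx.
have HD : MF (xb + l *: (x - xb)) /\ MF (xb - l *: (x - xb)).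
  split.
  - have := MF_convex (t := l) (conj Kx (ex_intro2 _ _ e e0 He)) MF_xb (ltW l0) l1.
    have -> // : l *: x + (1 - l) *: xb = xb + l *: (x - xb).
    by apply/rowP => i; rewrite !mxE; ring.
  - have := MF_convex (t := (1 + e)^-1) MFe MF_xb.
    have -> : (1 + e)^-1 *: (xb + e *: (xb - x)) + (1 - (1 + e)^-1) *: xb = xb - l *: (x - xb).
      by apply/rowP => i; rewrite /l !mxE; field; have : 1 + e != 0 by rewrite gt_eqF //; lra.
    apply; first by rewrite invr_ge0; lra.
    by rewrite invf_le1; lra.
have -> : x - xb = l^-1 *: (l *: (x - xb)) by rewrite scalerA mulVf ?gt_eqF // scale1r.
by apply: scalemx_sub; apply: Hsp.
Qed.

Lemma MF_conj s : dual_cone K s -> pair s xb = 0 -> conj_face K MF s.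
Proof.
move=> ds s0; split => // x [Kx [e e0 He]].
have := ds _ He; have := ds _ Kx; rewrite pairDr pairZr pairBr s0; nra.
Qed.

End Faces.

Unset Implicit Arguments. Set Strict Implicit.


Theorem proposition4p1 (R : realType) (n m : nat) (K : 'rV[R]_n -> Prop)
    (A : 'M[R]_(n, m)) (c : 'rV[R]_n) (b : 'rV[R]_m) :
  is_cone K -> convex_set K -> closed_set K -> pointed K ->
  (exists x, interior K x) ->
  (exists x, primal_feas K A b x /\ interior K x) ->
  forall xb : 'rV[R]_n, primal_feas K A b xb ->
  ((exists sb : 'rV[R]_n, dual_feas K A c sb /\ strictly_complementary K xb sb)
   <-> relint (normal_cone (primal_feas K A b) xb) c).
Proof.
move=> Kc Kv _ _ _ slater xb xbF.
have Kxb : K xb by case: xbF.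
set N := normal_cone (primal_feas K A b) xb.
have Nconv : convex_set N by apply: normal_convex.
split.
- move=> [sb [[dsb [yb sbE]] [F [fF rF rsb]]]].
  have Fxb : F xb by case: rF.
  have DtoC : forall s, Dset K xb s -> conj_face K F s.
    by move=> s [ds s0]; exact: (face_conj fF rF ds s0).
  have CtoD : forall s, conj_face K F s -> Dset K xb s.
    by move=> s [ds o]; split => //; apply: o.
  have cE : c = yb *m A^T - sb by rewrite sbE opprB addrC subrK.
  have Nc : N c by rewrite cE; apply: dual_normal => //; apply: CtoD; case: rsb.
  have [k [G [HG Hsp]]] := span_exists (fun v => N (c + v) /\ N (c - v)).
  apply: (relint_gen Nconv Nc HG) => c' Nc'.
  have [y' Dy'] := normal_dual Kc Kv xbF slater Nc'.
  set s' := y' *m A^T - c' in Dy'.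
  have Cs' := DtoC _ Dy'.
  case: rsb => Csb [r r0 Hr].
  have [eps [e0 e1] he] := small_scale (s' - sb) r0.
  suff Hd : N (c + eps *: (c' - c)) /\ N (c - eps *: (c' - c)).
    have -> : c' - c = eps^-1 *: (eps *: (c' - c)) by rewrite scalerA mulVf ?gt_eqF // scale1r.
    by apply: scalemx_sub; apply: Hsp.
  split.
    have := Nconv _ _ eps Nc' Nc (ltW e0) e1.
    have -> // : eps *: c' + (1 - eps) *: c = c + eps *: (c' - c).
    by apply/rowP => i; rewrite !mxE; ring.
  set s'' := (1 + eps) *: sb + (1 - (1 + eps)) *: s'.
  have Cs'' : conj_face K F s''.
    apply: Hr; first by apply: aff2.
    rewrite /in_ball.
    have -> : s'' - sb = - (eps *: (s' - sb)) by apply/rowP => i; rewrite !mxE; ring.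
    by rewrite pairNl pairNr opprK.
  have := dual_normal xbF (yb - eps *: (y' - yb)) (CtoD _ Cs'').
  have -> // : (yb - eps *: (y' - yb)) *m A^T - s'' = c - eps *: (c' - c).
  have c'E : c' = y' *m A^T - s' by rewrite /s' opprB addrC subrK.
  rewrite c'E cE mulmxBl -scalemxAl mulmxBl /s''.
  set Y1 := yb *m A^T; set Y2 := y' *m A^T.
  by apply/rowP => i; rewrite !mxE; ring.
- move=> [Nc [e eN HN]].
  set F := MF K xb.
  have DtoC : forall s, Dset K xb s -> conj_face K F s.
    by move=> s [ds s0]; apply: MF_conj.
  have CtoD : forall s, conj_face K F s -> Dset K xb s.
    by move=> s [ds o]; split => //; apply: o; apply: MF_xb.
  have [k [G [HG Hsp]]] := span_exists (conj_face K F).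
  set s0 := \sum_(j < k) row j G.
  have Cs0 : conj_face K F s0 by apply: conj_sum.
  have rs0 : relint (conj_face K F) s0.
    apply: (relint_gen (conj_convex (K := K) (F := F)) Cs0).
      move=> j; split; first by apply: conjD.
      have -> : s0 - row j G = \sum_(i < k | i != j) row i G.
        by rewrite /s0 (bigD1 j) //= addrAC subrr add0r.
      exact: conj_sum.
    move=> s Cs; apply: addmx_sub; first exact: Hsp.
    rewrite eqmx_opp; apply: summx_sub => i _; exact: row_sub.
  have Nc0 : N (- s0).
    have := dual_normal xbF 0 (CtoD _ Cs0).
    by rewrite mul0mx sub0r.
  have [eps [ep0 ep1] hep] := small_scale (c + s0) eN.
  set c' := (1 + eps) *: c + (1 - (1 + eps)) *: - s0.
  have Nc' : N c'.
    apply: HN; first by apply: aff2.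
    rewrite /in_ball.
    have -> : c' - c = eps *: (c + s0) by apply/rowP => i; rewrite !mxE; ring.
    exact: hep.
  have [y2 D2] := normal_dual Kc Kv xbF slater Nc'.
  have C2 := DtoC _ D2.
  set s2 := y2 *m A^T - c' in C2.
  have d0 : 0 < 1 + eps by lra.
  set l := eps / (1 + eps).
  have l0 : 0 < l by rewrite divr_gt0.
  have l1 : l <= 1 by rewrite ler_pdivrMr // mul1r; lra.
  have rsb := relint_seg (conj_convex (K := K) (F := F)) rs0 C2 l0 l1.
  exists (l *: s0 + (1 - l) *: s2); split.
    split; first by case: rsb => [[]].
    exists ((1 + eps)^-1 *: y2).
    rewrite -scalemxAl /s2 /c' /l; set Y := y2 *m A^T.
    apply/rowP => i; rewrite !mxE; field.
    by rewrite gt_eqF.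
  exists F; split => //.
  + exact: MF_face.
  + exact: MF_relint.
Qed.
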